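(* Let $\mu$ be a probability measure on $\mathrm{Homeo}_+(\mathbb{R})$ with finite or countable support. If there exists $\varepsilon>0$ such that $\phi_+(x)\ge\varepsilon$ for all $x\in\mathbb{R}$, then $\phi_+\equiv 1$. Symmetrically, if there exists $\varepsilon>0$ such that $\phi_-(x)\ge\varepsilon$ for all $x\in\mathbb{R}$, then $\phi_-\equiv1$.
   Context: Setup. Let $\mu$ be a probability measure on the group $\mathrm{Homeo}_+(\mathbb{R})$ of orientation-preserving homeomorphisms of $\mathbb{R}$, supported on a finite or countable set $\{f_1,f_2,\dots\}$ with $p_i=\mu(\{f_i\})>0$, $\sum_i p_i=1$. Let $g_1,g_2,\dots$ be i.i.d. random maps with law $\mu$, and set $F_0=\mathrm{id}$, $F_n=g_n\circ\cdots\circ g_1$. For $x\in\mathbb{R}$ let $\phi_+(x)=\mathbb{P}(\lim_n F_n(x)=+\infty)$ and $\phi_-(x)=\mathbb{P}(\lim_n F_n(x)=-\infty)$. *)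

(* Defs.v *)
From HB Require Import structures.
From mathcomp Require Import all_boot all_order all_algebra.
From mathcomp Require Import all_classical all_reals all_analysis.
Set Implicit Arguments. Unset Strict Implicit. Unset Printing Implicit Defensive.
Import Order.TTheory GRing.Theory Num.Theory numFieldNormedType.Exports.
Local Open Scope classical_set_scope.
Local Open Scope ring_scope.

Definition homeo_plus (R : realType) (f : R -> R) : Prop :=
  (exists g : R -> R, cancel f g /\ cancel g f /\ continuous f /\ continuous g)
  /\ {homo f : x y / x < y}.

(* F t n = g_n o ... o g_1 evaluated along the sample t, where the
   i.i.d. maps are g_{k+1} = f (G k t). F 0 = id. *)
Fixpoint Fwalk (R : realType) (I T : Type) (f : I -> R -> R)
    (G : nat -> T -> I) (t : T) (n : nat) (x : R) : R :=
  match n with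
  | 0 => x
  | n'.+1 => f (G n' t) (Fwalk f G t n' x)
  end.

(* (G n)_n is an i.i.d. sequence with law p on the index set I:
   every initial segment has the product joint law. *)
Definition iid_with_law (d : measure_display) (T : measurableType d)
    (R : realType) (P : probability T R) (I : Type) (p : I -> R)
    (G : nat -> T -> I) : Prop :=
  (forall n (i : I), measurable (G n @^-1` [set i])) /\
  (forall (n : nat) (s : nat -> I),
     P [set t | forall k, (k < n)%N -> G k t = s k]
       = ((\prod_(k < n) p (s k))%:E)%E).

Definition phi_plus (d : measure_display) (T : measurableType d)
    (R : realType) (P : probability T R) (I : Type) (f : I -> R -> R)
    (G : nat -> T -> I) (x : R) : \bar R :=
  P [set t | (fun n => Fwalk f G t n x) @ \oo --> +oo].

Definition phi_minus (d : measure_display) (T : measurableType d)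
    (R : realType) (P : probability T R) (I : Type) (f : I -> R -> R)
    (G : nat -> T -> I) (x : R) : \bar R :=
  P [set t | (fun n => Fwalk f G t n x) @ \oo --> -oo].

(* Main.v *)
Require Import Defs.
From HB Require Import structures.
From mathcomp Require Import all_boot all_order all_algebra.
From mathcomp Require Import all_classical all_reals all_analysis.
From mathcomp Require Import zify.
Import Order.TTheory GRing.Theory Num.Theory numFieldNormedType.Exports.
Local Open Scope classical_set_scope.
Local Open Scope ring_scope.
Set Implicit Arguments. Unset Strict Implicit. Unset Printing Implicit Defensive.

Section Generic.
Variables (d : measure_display) (T : measurableType d) (R : realType)
  (P : probability T R).
Local Open Scope ereal_scope.

Definition reidx (J : countType) (B : J -> set T) (n : nat) : set T :=
  if @pickle_inv J n is Some j then B j else set0.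

Lemma reidxE (J : countType) (B : J -> set T) :
  \bigcup_(j in [set: J]) B j = \bigcup_n reidx B n.
Proof.
apply/seteqP; split => t /=.
- move=> [j _ Bt]; exists (pickle j) => //; by rewrite /reidx pickleK_inv.
- move=> [n _]; rewrite /reidx; case: pickle_inv => [j|]// Bt; by exists j.
Qed.

Lemma reidx_meas (J : countType) (B : J -> set T) :
  (forall j, measurable (B j)) -> forall n, measurable (reidx B n).
Proof. by move=> mB n; rewrite /reidx; case: pickle_inv. Qed.

Lemma reidx_triv (J : countType) (B : J -> set T) :
  trivIset setT B -> trivIset setT (reidx B).
Proof.
move=> tB m n _ _; rewrite /reidx.
case Em: pickle_inv => [i|]; last by rewrite set0I => -[].
case En: pickle_inv => [j|]; last by rewrite setI0 => -[].
move=> /(tB i j I I) ij; subst j.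
by move: (@pickle_invK J m) (@pickle_invK J n); rewrite Em En /= => <- <-.
Qed.

Lemma bigcupJ_meas (J : countType) (B : J -> set T) :
  (forall j, measurable (B j)) -> measurable (\bigcup_(j in [set: J]) B j).
Proof. by move=> mB; rewrite reidxE; apply: bigcupT_measurable => n; exact: reidx_meas. Qed.


Lemma union_le (J : countType) (B C : J -> set T) (c : R) :
  (forall j, measurable (B j)) -> (forall j, measurable (C j)) ->
  trivIset setT B -> trivIset setT C -> (0 <= c)%R ->
  (forall j, c%:E * P (C j) <= P (B j)) ->
  c%:E * P (\bigcup_(j in [set: J]) C j) <= P (\bigcup_(j in [set: J]) B j).
Proof.
move=> mB mC tB tC c0 H.
have mB' i : [set: nat] i -> measurable (reidx B i) by move=> _; exact: reidx_meas.
have mC' i : [set: nat] i -> measurable (reidx C i) by move=> _; exact: reidx_meas.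
rewrite (reidxE B) (reidxE C) (@measure_bigcup _ _ _ P [set: nat] (reidx B) mB' (reidx_triv tB)).
rewrite (@measure_bigcup _ _ _ P [set: nat] (reidx C) mC' (reidx_triv tC)).
rewrite -nneseriesZl //; apply: lee_nneseries.
  by move=> i _ _; rewrite mule_ge0.
by move=> n _; rewrite /reidx; case: pickle_inv => [j|]; [exact: H | by rewrite measure0 mule0].
Qed.

Lemma union_eq (J : countType) (B C : J -> set T) (c : R) :
  (forall j, measurable (B j)) -> (forall j, measurable (C j)) ->
  trivIset setT B -> trivIset setT C -> (0 <= c)%R ->
  (forall j, P (B j) = c%:E * P (C j)) ->
  P (\bigcup_(j in [set: J]) B j) = c%:E * P (\bigcup_(j in [set: J]) C j).
Proof.
move=> mB mC tB tC c0 H.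
have mB' i : [set: nat] i -> measurable (reidx B i) by move=> _; exact: reidx_meas.
have mC' i : [set: nat] i -> measurable (reidx C i) by move=> _; exact: reidx_meas.
rewrite (reidxE B) (reidxE C) (@measure_bigcup _ _ _ P [set: nat] (reidx B) mB' (reidx_triv tB)).
rewrite (@measure_bigcup _ _ _ P [set: nat] (reidx C) mC' (reidx_triv tC)).
rewrite -nneseriesZl //; apply: eq_eseriesr.
by move=> n _; rewrite /reidx; case: pickle_inv => [j|]; [exact: H | by rewrite measure0 mule0].
Qed.

End Generic.

Section Good.
Variables (d : measure_display) (T : measurableType d) (R : realType)
  (P : probability T R) (I : countType) (p : I -> R) (G : nat -> T -> I).
Hypothesis hG : iid_with_law P p G.
Variable i0 : I.
Local Open Scope ereal_scope.

Definition om (t : T) : nat -> I := fun k => G k t.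
Definition shiftS (n : nat) (w : nat -> I) : nat -> I := fun k => w (k + n)%N.
Definition cyl n (s : nat -> I) := [set t | forall k, (k < n)%N -> G k t = s k].
Definition evs n (E : (nat -> I) -> Prop) := [set t | E (shiftS n (om t))].
Definition findim K (E : (nat -> I) -> Prop) :=
  forall w w', (forall k, (k < K)%N -> w k = w' k) -> E w -> E w'.
Definition good (E : (nat -> I) -> Prop) :=
  forall n s, measurable (cyl n s `&` evs n E) /\
    P (cyl n s `&` evs n E) = P (cyl n s) * P (evs 0 E).

Lemma cyl_meas n s : measurable (cyl n s).
Proof.
elim: n => [|n IH].
  by rewrite (_ : cyl 0 s = setT) //; apply/seteqP; split => t //=.
rewrite (_ : cyl n.+1 s = cyl n s `&` G n @^-1` [set s n]).
  by apply: measurableI => //; exact: hG.1.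
apply/seteqP; split => t /=.
  by move=> H; split; [move=> k kn; apply: H; rewrite ltnS ltnW | apply: H].
move=> [H1 H2] k; rewrite ltnS leq_eqVlt => /orP[/eqP -> //|]; exact: H1.
Qed.

Lemma cylE n s : P (cyl n s) = (\prod_(k < n) p (s k))%:E.
Proof. exact: hG.2. Qed.

Lemma cyl0 s : cyl 0 s = setT.
Proof. by apply/seteqP; split => t. Qed.

Definition sc n (s : nat -> I) (u : seq I) : nat -> I :=
  fun k => if (k < n)%N then s k else nth i0 u (k - n).

Definition Bset n s (E : (nat -> I) -> Prop) K (u : seq I) :=
  [set t | (size u = K /\ E (nth i0 u)) /\ (forall k, (k < n)%N -> G k t = s k)
     /\ (forall k, (k < K)%N -> G (k + n)%N t = nth i0 u k)].

Lemma Bset_empty n s E K u : ~ (size u = K /\ E (nth i0 u)) -> Bset n s E K u = set0.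
Proof. by move=> nc; apply/seteqP; split => t // []. Qed.

Lemma Bset_eq n s E K u : size u = K -> E (nth i0 u) ->
  Bset n s E K u = cyl (n + K) (sc n s u).
Proof.
move=> su Eu; apply/seteqP; split => t /=.
  move=> [_ [H1 H2]] k kn; rewrite /sc; case: ifPn => kn'; first exact: H1.
  rewrite -H2 ?subnK //; lia.
move=> H; split => //; split.
  by move=> k kn; rewrite H ?/sc ?kn //; lia.
move=> k kK; rewrite H /sc; last lia.
by rewrite ifF ?addnK //; lia.
Qed.

Lemma Bset_cases n s E K u :
  (size u = K /\ E (nth i0 u) /\ Bset n s E K u = cyl (n + K) (sc n s u))
  \/ Bset n s E K u = set0.
Proof.
have [[su Eu]|nc] := pselect (size u = K /\ E (nth i0 u)).
  by left; do 2!split => //; exact: Bset_eq.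
by right; exact: Bset_empty.
Qed.

Lemma Bset_meas n s E K u : measurable (Bset n s E K u).
Proof. by case: (Bset_cases n s E K u) => [[_ [_ ->]]|->]//; exact: cyl_meas. Qed.

Lemma Bset_triv n s E K : trivIset setT (Bset n s E K).
Proof.
move=> u v _ _ [t [[[su _] [_ Hu]] [[sv _] [_ Hv]]]].
apply: (@eq_from_nth _ i0); first by rewrite su sv.
by move=> k; rewrite su => kK; rewrite -Hu // -Hv.
Qed.

Lemma Bset_union n s E K : findim K E ->
  cyl n s `&` evs n E = \bigcup_(u in [set: seq I]) Bset n s E K u.
Proof.
move=> fE; apply/seteqP; split => t /=.
  move=> [Hc HE]; exists [seq G (k + n)%N t | k <- iota 0 K] => //.
  have Hn k : (k < K)%N -> nth i0 [seq G (k + n)%N t | k <- iota 0 K] k = G (k + n)%N t.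
    by move=> kK; rewrite (nth_map 0%N) ?size_iota // nth_iota.
  split; last by split => // k kK; rewrite Hn.
  split; first by rewrite size_map size_iota.
  by apply: (fE _ _ _ HE) => k kK; rewrite Hn.
move=> [u _ [[su Eu] [Hc HK]]]; split => //.
by apply: (fE _ _ _ Eu) => k kK; rewrite /shiftS /om HK.
Qed.

Lemma Bset_P n s E K u :
  P (Bset n s E K u) = P (cyl n s) * P (Bset 0 s E K u).
Proof.
have [[su Eu]|nc] := pselect (size u = K /\ E (nth i0 u)); last first.
  by rewrite !Bset_empty // measure0 mule0.
rewrite !Bset_eq // !cylE -EFinM; congr (_%:E).
rewrite big_split_ord /=.
change (\prod_(k < 0 + K) p (sc 0 s u k))%R with (\prod_(k < K) p (sc 0 s u k))%R.
congr (_ * _)%R.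
  by apply: eq_bigr => k _; rewrite /sc /= ltn_ord.
by apply: eq_bigr => k _; rewrite /sc /= ifF ?addKn ?subn0 //; lia.
Qed.

Lemma cylP_ge0 n (s : nat -> I) : (0 <= \prod_(k < n) p (s k))%R.
Proof. by rewrite -lee_fin -cylE. Qed.

Lemma good_findim K E : findim K E -> good E.
Proof.
move=> fE n s; split.
  by rewrite (Bset_union n s fE); apply: bigcupJ_meas => u; exact: Bset_meas.
have -> : evs 0 E = cyl 0 s `&` evs 0 E by rewrite cyl0 setTI.
rewrite (Bset_union n s fE) (Bset_union 0 s fE) cylE.
apply: union_eq; [exact: Bset_meas|exact: Bset_meas|exact: Bset_triv|exact: Bset_triv|exact: cylP_ge0|].
by move=> u; rewrite Bset_P cylE.
Qed.

Lemma evs_bigcap n (E : nat -> (nat -> I) -> Prop) :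
  evs n (fun w => forall m, E m w) = \bigcap_m evs n (E m).
Proof. by apply/seteqP; split => t; rewrite /evs /bigcap /=; firstorder. Qed.

Lemma evs_bigcup n (E : nat -> (nat -> I) -> Prop) :
  evs n (fun w => exists m, E m w) = \bigcup_m evs n (E m).
Proof.
apply/seteqP; split => t /=; rewrite /evs /=.
  by move=> [m Hm]; exists m.
by move=> [m _ Hm]; exists m.
Qed.

Lemma good_meas0 E : good E -> measurable (evs 0 E).
Proof. by move=> /(_ 0%N (fun=> i0)) [+ _]; rewrite cyl0 setTI. Qed.

Lemma finP A : measurable A -> P A \is a fin_num.
Proof. by move=> mA; rewrite ge0_fin_numE // (le_lt_trans (probability_le1 P mA)) // ltry. Qed.

Lemma good_bigcap (E : nat -> (nat -> I) -> Prop) :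
  (forall m, good (E m)) -> (forall m w, E m.+1 w -> E m w) ->
  good (fun w => forall m, E m w).
Proof.
move=> gE dE n s.
have mF m : measurable (cyl n s `&` evs n (E m)) by case: (gE m n s).
have nF : nonincreasing_seq (fun m => cyl n s `&` evs n (E m)).
  apply/nonincreasing_seqP => m; apply/subsetPset; apply: setIS => t; exact: dE.
have nF0 : nonincreasing_seq (fun m => evs 0 (E m)).
  apply/nonincreasing_seqP => m; apply/subsetPset => t; exact: dE.
have mI : measurable (\bigcap_m (cyl n s `&` evs n (E m))) by apply: bigcapT_measurable.
have eI : cyl n s `&` evs n (fun w => forall m, E m w) = \bigcap_m (cyl n s `&` evs n (E m)).
  apply/seteqP; split => t; rewrite /evs /bigcap /=.
    by move=> [Hc HE] m _; split => //; exact: HE.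
  by move=> H; split; [exact: (proj1 (H 0%N Logic.I)) | move=> m; exact: (proj2 (H m Logic.I))].
split; first by rewrite eI.
have h1 := nonincreasing_cvg_mu (mu := P) (le_lt_trans (probability_le1 P (mF 0%N)) (ltry _)) mF mI nF.
have m0 m : measurable (evs 0 (E m)) by apply: good_meas0.
have h2 := nonincreasing_cvg_mu (mu := P) (le_lt_trans (probability_le1 P (m0 0%N)) (ltry _))
  m0 (bigcapT_measurable m0) nF0.
have hd : P (cyl n s) *? P (\bigcap_m evs 0 (E m)).
  by apply: mule_def_fin; apply: finP; [exact: cyl_meas | exact: bigcapT_measurable].
have h3 : (fun m => P (cyl n s) * P (evs 0 (E m))) @ \oo --> P (cyl n s) * P (\bigcap_m evs 0 (E m)).
  by apply: cvgeM hd _ h2; exact: cvg_cst.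
rewrite eI evs_bigcap; have h4 : (P \o (fun m => cyl n s `&` evs n (E m))) x @[x --> \oo] --> P (cyl n s) * P (\bigcap_m evs 0 (E m)).
  apply: (cvg_trans _ h3); apply: near_eq_cvg; near=> m => /=; by case: (gE m n s).
exact: (cvg_unique (@ereal_hausdorff R) h1 h4).
Unshelve. all: by end_near.
Qed.

Lemma good_bigcup (E : nat -> (nat -> I) -> Prop) :
  (forall m, good (E m)) -> (forall m w, E m w -> E m.+1 w) ->
  good (fun w => exists m, E m w).
Proof.
move=> gE dE n s.
have mF m : measurable (cyl n s `&` evs n (E m)) by case: (gE m n s).
have nF : nondecreasing_seq (fun m => cyl n s `&` evs n (E m)).
  apply/nondecreasing_seqP => m; apply/subsetPset; apply: setIS => t; exact: dE.
have nF0 : nondecreasing_seq (fun m => evs 0 (E m)).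
  apply/nondecreasing_seqP => m; apply/subsetPset => t; exact: dE.
have mI : measurable (\bigcup_m (cyl n s `&` evs n (E m))) by apply: bigcupT_measurable.
have eI : cyl n s `&` evs n (fun w => exists m, E m w) = \bigcup_m (cyl n s `&` evs n (E m)).
  by rewrite evs_bigcup setI_bigcupr.
split; first by rewrite eI.
have h1 := nondecreasing_cvg_mu (mu := P) mF mI nF.
have m0 m : measurable (evs 0 (E m)) by apply: good_meas0.
have h2 := nondecreasing_cvg_mu (mu := P) m0 (bigcupT_measurable _ m0) nF0.
have hd : P (cyl n s) *? P (\bigcup_m evs 0 (E m)).
  by apply: mule_def_fin; apply: finP; [exact: cyl_meas | exact: bigcupT_measurable].
have h3 : (fun m => P (cyl n s) * P (evs 0 (E m))) @ \oo --> P (cyl n s) * P (\bigcup_m evs 0 (E m)).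
  by apply: cvgeM hd _ h2; exact: cvg_cst.
rewrite eI evs_bigcup; have h4 : (P \o (fun m => cyl n s `&` evs n (E m))) x @[x --> \oo] --> P (cyl n s) * P (\bigcup_m evs 0 (E m)).
  apply: (cvg_trans _ h3); apply: near_eq_cvg; near=> m => /=; by case: (gE m n s).
exact: (cvg_unique (@ereal_hausdorff R) h1 h4).
Unshelve. all: by end_near.
Qed.

Variable f : I -> R -> R.

Fixpoint Fw (w : nat -> I) (n : nat) (x : R) : R :=
  match n with 0 => x | n'.+1 => f (w n') (Fw w n' x) end.

Lemma FwalkE t n x : Fwalk f G t n x = Fw (om t) n x.
Proof. by elim: n => //= n ->. Qed.

Lemma Fw_shift w K m x : Fw w (m + K) x = Fw (shiftS K w) m (Fw w K x).
Proof. by elim: m => //= m ->. Qed.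

Lemma Fw_fd w w' n x : (forall k, (k < n)%N -> w k = w' k) -> Fw w n x = Fw w' n x.
Proof.
elim: n => //= n IH H; rewrite H // IH // => k kn; apply: H; exact: ltnW.
Qed.

Definition Aw (y : R) (w : nat -> I) := (fun n => Fw w n y) @ \oo --> +oo%R.

Lemma Aw_char y w : Aw y w <->
  forall M : nat, exists N, forall n, (N <= n)%N -> (M%:R < Fw w n y)%R.
Proof.
rewrite /Aw cvgryPgt; split.
  move=> H M; have [N _ HN] := H M%:R; exists N => n; exact: HN.
move=> H A; have [M AM] : exists M : nat, (A < M%:R)%R by eexists; exact: truncnS_gt.
have [N HN] := H M; exists N => // n /= Nn; rewrite (lt_trans AM) //; exact: HN.
Qed.

Definition E1 y (M N K : nat) (w : nat -> I) :=
  forall n, (N <= n)%N -> (n < K)%N -> (M%:R < Fw w n y)%R.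

Lemma AwE y : Aw y = fun w => forall M, exists N, forall K, E1 y M N K w.
Proof.
apply/funext => w; apply/propext; rewrite Aw_char; split.
  by move=> H M; have [N HN] := H M; exists N => K n Nn _; exact: HN.
move=> H M; have [N HN] := H M; exists N => n Nn; exact: (HN n.+1).
Qed.

Lemma good_Aw y : good (Aw y).
Proof.
rewrite AwE; apply: good_bigcap; last first.
  move=> M w [N HN]; exists N => K n Nn nK; rewrite (@lt_trans _ _ M.+1%:R) ?ltr_nat //.
  exact: HN.
move=> M; apply: good_bigcup; last first.
  by move=> N w HN K n Nn nK; apply: HN => //; exact: ltnW.
move=> N; apply: good_bigcap; last first.
  by move=> K w HK n Nn nK; apply: HK => //; exact: ltnW.
move=> K; apply: (@good_findim K) => w w' ww' H n Nn nK.
by rewrite -(@Fw_fd w) ?H // => k kn; apply: ww'; exact: ltn_trans nK.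
Qed.

Lemma shiftS0 w : shiftS 0 w = w.
Proof. by apply/funext => k; rewrite /shiftS addn0. Qed.

Lemma Aw_shift x w K : Aw x w = Aw (Fw w K x) (shiftS K w).
Proof.
rewrite /Aw -(cvg_shiftn K) /=.
by have -> : (fun n => Fw w (n + K) x) = fun n => Fw (shiftS K w) n (Fw w K x)
  by apply/funext => n; rewrite Fw_shift.
Qed.

Section Eps.
Variable eps : R.
Hypothesis eps0 : (0 < eps)%R.
Hypothesis heps : forall y, eps%:E <= P (evs 0 (Aw y)).

Lemma core x K u : eps%:E * P (cyl K u) <= P (evs 0 (Aw x) `&` cyl K u).
Proof.
have -> : evs 0 (Aw x) `&` cyl K u = cyl K u `&` evs K (Aw (Fw u K x)).
  rewrite setIC; apply/seteqP; split => t [Hc HA]; split => //; move: HA;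
  rewrite /evs /= shiftS0 (Aw_shift x (om t) K) (@Fw_fd (om t) u) // => k kK; by rewrite /om Hc.
rewrite (proj2 (good_Aw _ K u)) muleC.
apply: lee_pmul => //; first by rewrite lee_fin ltW.
Qed.

Lemma mA x : measurable (evs 0 (Aw x)).
Proof. exact: good_meas0 (good_Aw x). Qed.

Lemma fd_lb x K D : findim K D ->
  eps%:E * P (evs 0 D) <= P (evs 0 (Aw x) `&` evs 0 D).
Proof.
move=> fD.
have -> : evs 0 D = cyl 0 (fun=> i0) `&` evs 0 D by rewrite cyl0 setTI.
rewrite (Bset_union 0 (fun=> i0) fD) setI_bigcupr.
apply: union_le; first by move=> u; apply: measurableI; [exact: mA|exact: Bset_meas].
- exact: Bset_meas.
- move=> u v _ _ [t [[_ Hu] [_ Hv]]]; apply: (Bset_triv (n:=0) (s:=fun=> i0) (E:=D) (K:=K) Logic.I Logic.I); by exists t.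
- exact: Bset_triv.
- exact: ltW.
move=> u; case: (Bset_cases 0 (fun=> i0) D K u) => [[_ [_ ->]]|->].
  exact: core.
by rewrite measure0 mule0 measure_ge0.
Qed.

Definition D3 x (M N K : nat) (w : nat -> I) :=
  exists n, [/\ (N <= n)%N, (n < K)%N & (Fw w n x <= M%:R)%R].
Definition D2 x M N w := exists K, D3 x M N K w.
Definition D1 x M w := forall N, D2 x M N w.

Lemma fd_D3 x M N K : findim K (D3 x M N K).
Proof.
move=> w w' ww' [n [Nn nK Hn]]; exists n; split => //.
by rewrite -(@Fw_fd w) // => k kn; apply: ww'; exact: ltn_trans nK.
Qed.

Lemma D3_incr x M N K w : D3 x M N K w -> D3 x M N K.+1 w.
Proof. by move=> [n [Nn nK Hn]]; exists n; split => //; exact: ltnW. Qed.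

Lemma good_D2 x M N : good (D2 x M N).
Proof. apply: (@good_bigcup (D3 x M N)); last exact: D3_incr. move=> K; exact: (good_findim (@fd_D3 x M N K)). Qed.

Lemma D2_decr x M N w : D2 x M N.+1 w -> D2 x M N w.
Proof. by move=> [K [n [Nn nK Hn]]]; exists K, n; split => //; exact: ltnW. Qed.

Lemma good_D1 x M : good (D1 x M).
Proof. apply: (@good_bigcap (D2 x M)); last exact: D2_decr. move=> N; exact: good_D2. Qed.

Lemma D2_lb x M N : eps%:E * P (evs 0 (D2 x M N)) <= P (evs 0 (Aw x) `&` evs 0 (D2 x M N)).
Proof.
have m3 K : measurable (evs 0 (D3 x M N K)) by apply: good_meas0; exact: (good_findim (@fd_D3 x M N K)).
have n3 : nondecreasing_seq (fun K => evs 0 (D3 x M N K)).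
  apply/nondecreasing_seqP => K; apply/subsetPset => t; exact: D3_incr.
have n3' : nondecreasing_seq (fun K => evs 0 (Aw x) `&` evs 0 (D3 x M N K)).
  apply/nondecreasing_seqP => K; apply/subsetPset; apply: setIS => t; exact: D3_incr.
have m3' K : measurable (evs 0 (Aw x) `&` evs 0 (D3 x M N K)) by apply: measurableI => //; exact: mA.
have h1 := nondecreasing_cvg_mu (mu := P) m3 (bigcupT_measurable _ m3) n3.
have h2 := nondecreasing_cvg_mu (mu := P) m3' (bigcupT_measurable _ m3') n3'.
have hd : eps%:E *? P (\bigcup_K evs 0 (D3 x M N K)).
  by apply: mule_def_fin => //; apply: finP; exact: bigcupT_measurable.
have h3 : (fun K => eps%:E * P (evs 0 (D3 x M N K))) @ \oo --> eps%:E * P (\bigcup_K evs 0 (D3 x M N K)).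
  by apply: cvgeM hd _ h1; exact: cvg_cst.
rewrite /D2 evs_bigcup setI_bigcupr; apply: (lee_cvg_to h3 h2).
by near=> K; apply: fd_lb; exact: fd_D3.
Unshelve. all: by end_near.
Qed.

Lemma D1_null x M : P (evs 0 (D1 x M)) = 0.
Proof.
have m2 N : measurable (evs 0 (Aw x) `&` evs 0 (D2 x M N)).
  by apply: measurableI; [exact: mA | exact: good_meas0 (good_D2 x M N)].
have n2 : nonincreasing_seq (fun N => evs 0 (Aw x) `&` evs 0 (D2 x M N)).
  apply/nonincreasing_seqP => N; apply/subsetPset; apply: setIS => t; exact: D2_decr.
have h := nonincreasing_cvg_mu (mu := P) (le_lt_trans (probability_le1 P (m2 0%N)) (ltry _))
  m2 (bigcapT_measurable m2) n2.
have e0 : \bigcap_N (evs 0 (Aw x) `&` evs 0 (D2 x M N)) = set0.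
  apply/seteqP; split => t // Ht; exfalso.
  have /Aw_char HA := proj1 (Ht 0%N Logic.I); rewrite shiftS0 in HA.
  have [N HN] := HA M.
  have [K [n [Nn nK Hn]]] := proj2 (Ht N Logic.I); rewrite shiftS0 in Hn.
  by move: (HN n Nn); rewrite ltNge Hn.
rewrite e0 measure0 in h.
have le0 : eps%:E * P (evs 0 (D1 x M)) <= 0.
  apply: (cvge_to_ge h); near=> N => /=.
  apply: le_trans (D2_lb x M N); apply: lee_pmul => //; first by rewrite lee_fin ltW.
  apply: le_measure; rewrite ?inE; [exact: good_meas0 (good_D1 x M)|exact: good_meas0 (good_D2 x M N)|].
  by move=> t; apply.
have mD := good_meas0 (good_D1 x M).
apply/eqP; rewrite eq_le measure_ge0 andbT.
move: le0 (finP mD); case: (P (evs 0 (D1 x M))) => [r||] //= h1 _.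
by rewrite lee_fin; move: h1; rewrite -EFinM lee_fin pmulr_rle0.
Unshelve. all: by end_near.
Qed.

Lemma notA x : ~` evs 0 (Aw x) = \bigcup_M evs 0 (D1 x M).
Proof.
apply/seteqP; split => t; rewrite /evs /= shiftS0.
  move=> nA; have /existsNP [M HM] : ~ (forall M : nat, exists N, forall n, (N <= n)%N -> (M%:R < Fw (om t) n x)%R).
    by move=> H; apply: nA; apply/Aw_char.
  exists M => // N; have /existsNP [n Hn] : ~ (forall n, (N <= n)%N -> (M%:R < Fw (om t) n x)%R).
    by move=> H; apply: HM; exists N.
  have Nn : (N <= n)%N by apply/negPn/negP => nN; apply: Hn => /(negP nN).
  have Hn' : ~ (M%:R < Fw (om t) n x)%R by move=> h; apply: Hn.
  exists n.+1, n; split => //; rewrite shiftS0 leNgt; exact/negP.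
move=> [M _ HD] /Aw_char HA.
have [N HN] := HA M.
have [K [n [Nn nK Hn]]] := HD N; rewrite shiftS0 in Hn.
by move: (HN n Nn); rewrite ltNge Hn.
Qed.

Lemma main_plus x : P (evs 0 (Aw x)) = 1.
Proof.
have m1 M : measurable (evs 0 (D1 x M)) by exact: good_meas0 (good_D1 x M).
have n1 : nondecreasing_seq (fun M => evs 0 (D1 x M)).
  apply/nondecreasing_seqP => M; apply/subsetPset => t H N.
  have [K [n [Nn nK Hn]]] := H N; exists K, n; split => //.
  by rewrite (le_trans Hn) // ler_nat.
have h := nondecreasing_cvg_mu (mu := P) m1 (bigcupT_measurable _ m1) n1.
have e0 : P (~` evs 0 (Aw x)) = 0.
  rewrite notA; apply: (cvg_unique (@ereal_hausdorff R) h).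
  have -> : P \o (fun M => evs 0 (D1 x M)) = fun=> 0 by apply/funext => M /=; exact: D1_null.
  exact: cvg_cst.
move: e0; rewrite probability_setC; last exact: mA.
move: (finP (mA x)); case: (P (evs 0 (Aw x))) => [r||] //= _.
by move/eqP; rewrite -EFinB eqe subr_eq0 => /eqP <-.
Qed.

End Eps.

End Good.

Lemma Fwalk_neg (R : realType) (I T : Type) (f : I -> R -> R) (G : nat -> T -> I) t n x :
  Fwalk (fun i y => - f i (- y)) G t n x = - Fwalk f G t n (- x).
Proof. by elim: n => [|n IH] /=; rewrite ?opprK // IH opprK. Qed.

Lemma phi_plusE d (T : measurableType d) (R : realType) (P : probability T R)
  (I : countType) (f : I -> R -> R) (G : nat -> T -> I) x :
  phi_plus P f G x = P (evs G 0 (Aw f x)).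
Proof.
rewrite /phi_plus /evs; congr (P _); apply/seteqP; split => t /=;
rewrite shiftS0 /Aw;
by have -> : (fun n => Fwalk f G t n x) = (fun n => Fw f (om G t) n x) by apply/funext => n; exact: FwalkE.
Qed.

Lemma phi_minusE d (T : measurableType d) (R : realType) (P : probability T R)
  (I : countType) (f : I -> R -> R) (G : nat -> T -> I) x :
  phi_minus P f G x = phi_plus P (fun i y => - f i (- y)) G (- x).
Proof.
rewrite /phi_plus /phi_minus; congr (P _); apply/seteqP; split => t /=.
  have -> : (fun n => Fwalk (fun i y => - f i (- y)) G t n (- x)) = - (fun n => Fwalk f G t n x).
    by apply/funext => n; rewrite Fwalk_neg opprK.
  by move=> H; apply/cvgNry.
have -> : (fun n => Fwalk (fun i y => - f i (- y)) G t n (- x)) = - (fun n => Fwalk f G t n x).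
  by apply/funext => n; rewrite Fwalk_neg opprK.
by move/cvgNry.
Qed.

Theorem proposition1 (d : measure_display) (T : measurableType d)
    (R : realType) (P : probability T R)
    (I : countType) (f : I -> R -> R) (p : I -> R) (G : nat -> T -> I) :
  (forall i, homeo_plus (f i)) ->
  (forall i, 0 < p i) ->
  (\esum_(i in [set: I]) (p i)%:E = 1)%E ->
  iid_with_law P p G ->
  ((exists eps : R, 0 < eps /\ forall x : R, (eps%:E <= phi_plus P f G x)%E) ->
     forall x : R, phi_plus P f G x = 1%E) /\
  ((exists eps : R, 0 < eps /\ forall x : R, (eps%:E <= phi_minus P f G x)%E) ->
     forall x : R, phi_minus P f G x = 1%E).
Proof.
move=> _ _ _ hG.
have [t _] : exists t : T, True.
  apply: contrapT => nt.
  have e : [set: T] = set0 by rewrite -subset0 => t' _; apply: nt; exists t'.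
  have := probability_setT P; rewrite e measure0 => /(congr1 fine) /= /eqP.
  by rewrite eq_sym oner_eq0.
have i0 := G 0%N t.
split.
  move=> [eps [eps0 heps]] x; rewrite phi_plusE; apply: (main_plus hG i0 eps0).
  by move=> y; rewrite -phi_plusE.
move=> [eps [eps0 heps]] x; rewrite phi_minusE phi_plusE; apply: (main_plus hG i0 eps0).
by move=> y; rewrite -phi_plusE -(opprK y) -phi_minusE.
Qed.
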